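(* Let $\alpha'>0$, $\nu':=\nu(\alpha')$, $T:=T(\alpha')$, let $\delta\in(0,1)$ and $0<\Delta\le(1-\delta)/\nu'$. Then for all integers $t,m$ and reals $x$ with $T\le x\le m<t$: $$e^{\nu'm}+\tfrac{t-m}{\alpha'}e^{\nu'(m-T)}\le e^{\nu't},$$ $$e^{\nu'm}-e^{\nu'(x-\Delta)}+\delta\,\tfrac{t-m}{\alpha'}e^{\nu'x}\le e^{\nu't}.$$
   Context: For $\alpha>0$, let $T=T(\alpha)\in\mathbb N$ be the unique positive integer with $\frac{(T-1)^T}{T^{T-1}}<\alpha\le\frac{T^{T+1}}{(T+1)^T}$, and define $\nu(\alpha):=\frac1T\log\frac T\alpha$. (In the paper this is applied with $\alpha'=\alpha/(1+3\epsilon)$, $\delta=(1+2\epsilon)/(1+3\epsilon)$, $\Delta\le\epsilon/(\nu'(1+3\epsilon))$.) *)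

(* Defs.v *)
From Stdlib Require Import Reals Lra Lia.
Open Scope R_scope.

(* T(alpha) is the unique positive integer T with
   (T-1)^T / T^(T-1) < alpha <= T^(T+1) / (T+1)^T. *)
Definition is_T (alpha : R) (T : nat) : Prop :=
  (1 <= T)%nat /\
  (INR T - 1) ^ T / INR T ^ (T - 1) < alpha /\
  alpha <= INR T ^ (T + 1) / (INR T + 1) ^ T.

Definition nu_of (alpha : R) (T : nat) : R := / INR T * ln (INR T / alpha).

(* Main.v *)
Require Import Defs.
From Stdlib Require Import Reals Lra Lia Psatz Arith ZArith.
Open Scope R_scope.

Lemma exp_pow_nat (x : R) (n : nat) : exp (INR n * x) = exp x ^ n.
Proof.
  induction n as [|n IH].
  - simpl; rewrite Rmult_0_l; apply exp_0.
  - rewrite S_INR; simpl pow; rewrite Rmult_plus_distr_r, Rmult_1_l, exp_plus, IH; ring.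
Qed.

Lemma pow_lt_strict (x y : R) (n : nat) : 0 <= x < y -> x ^ (S n) < y ^ (S n).
Proof.
  intros [Hx Hxy]. induction n as [|n IH].
  - simpl; lra.
  - change (x * x ^ S n < y * y ^ S n).
    assert (0 <= x ^ S n) by (apply pow_le; lra).
    nra.
Qed.

Lemma bernoulli (E a : R) (k : nat) : 0 <= a -> 1 + a <= E -> 1 + INR k * a <= E ^ k.
Proof.
  intros Ha HE. induction k as [|k IH].
  - simpl; lra.
  - rewrite S_INR; simpl pow.
    assert (0 <= INR k) by apply pos_INR.
    assert (0 <= INR k * a) by nra. nra.
Qed.

Lemma key (al E : R) (T k : nat) : 0 < al -> (1 <= T)%nat -> 1 <= E ->
  INR T * E >= INR T + 1 -> (INR T - 1) * E < INR T ->
  al * E ^ T = INR T -> (1 <= k)%nat -> INR k <= al * E ^ k.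
Proof.
  intros Hal HT HE1 Hup Hlo HET Hk.
  assert (HEp : 0 < E) by lra.
  destruct (Compare_dec.le_lt_dec T k) as [HTk|HkT].
  -
    replace k with (T + (k - T))%nat by lia.
    generalize (k - T)%nat. intro j. induction j as [|j IH].
    + rewrite Nat.add_0_r; lra.
    + replace (T + S j)%nat with (S (T + j)) by lia.
      rewrite S_INR; simpl.
      assert (HTj : INR T <= INR (T + j)) by (apply le_INR; lia).
      assert (0 <= al * E ^ (T + j)) by (apply Rmult_le_pos; [lra| apply pow_le; lra]).
      (* INR(T+j)+1 <= E * INR(T+j) <= al*E*E^(T+j) *)
      assert (INR (T + j) + 1 <= INR (T + j) * E).
      { assert (INR T >= 1) by (apply Rle_ge; change 1 with (INR 1); apply le_INR; lia).
        nra. }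
      nra.
  -
    assert (H : forall j kk, (kk + j = T)%nat -> (1 <= kk)%nat -> INR kk <= al * E ^ kk).
    { induction j as [|j IH]; intros kk Hkk Hkk1.
      - rewrite Nat.add_0_r in Hkk; subst; lra.
      - assert (IH' := IH (S kk) ltac:(lia) ltac:(lia)).
        rewrite S_INR in IH'; simpl in IH'.
        assert (Hk' : INR kk + 1 <= INR T) by (rewrite <- S_INR; apply le_INR; lia).
        assert (Hk1 : 1 <= INR kk) by (change 1 with (INR 1); apply le_INR; lia).
        assert (HkE : INR kk * E <= INR kk + 1) by nra.
        assert (0 < al * E ^ kk) by (apply Rmult_lt_0_compat; [lra| apply pow_lt; lra]).
        nra. }
    apply (H (T - k)%nat k); lia.
Qed.

Theorem lemma11 (alpha' : R) (T : nat) (delta Delta : R) :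
  0 < alpha' -> is_T alpha' T ->
  0 < delta < 1 ->
  0 < Delta -> Delta <= (1 - delta) / nu_of alpha' T ->
  forall (t m : Z) (x : R),
    INR T <= x -> x <= IZR m -> (m < t)%Z ->
    exp (nu_of alpha' T * IZR m)
      + (IZR t - IZR m) / alpha' * exp (nu_of alpha' T * (IZR m - INR T))
      <= exp (nu_of alpha' T * IZR t)
    /\
    exp (nu_of alpha' T * IZR m) - exp (nu_of alpha' T * (x - Delta))
      + delta * ((IZR t - IZR m) / alpha') * exp (nu_of alpha' T * x)
      <= exp (nu_of alpha' T * IZR t).
Proof.
  intros Hal [HT1 [Hlo Hup]] Hd HD HDnu t m x HTx Hxm Hmt.
  set (n := nu_of alpha' T) in *.
  set (E := exp n).
  assert (HTpos : 1 <= INR T) by (change 1 with (INR 1); apply le_INR; lia).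
  assert (HEp : 0 < E) by apply exp_pos.
  assert (HET : E ^ T = INR T / alpha').
  { unfold E. rewrite <- exp_pow_nat. unfold n, nu_of.
    replace (INR T * (/ INR T * ln (INR T / alpha'))) with (ln (INR T / alpha')) by (field; lra).
    apply exp_ln. apply Rdiv_lt_0_compat; lra. }
  assert (HET' : alpha' * E ^ T = INR T) by (rewrite HET; field; lra).
  destruct T as [|T'] eqn:HTT; [lia|].
  rewrite <- HTT in *.
  assert (HTT' : T = S T') by exact HTT.
  (* upper bound on alpha gives T*E >= T+1 *)
  assert (HupE : INR T * E >= INR T + 1).
  { apply Rnot_lt_ge; intro C.
    assert (Hp := pow_lt_strict (INR T * E) (INR T + 1) T' ltac:(split; nra)).
    rewrite <- HTT, Rpow_mult_distr, HET in Hp.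
    assert (Hpp : 0 < (INR T + 1) ^ T) by (apply pow_lt; lra).
    replace (T + 1)%nat with (S T) in Hup by lia.
    simpl in Hup.
    apply (Rmult_le_compat_r ((INR T + 1) ^ T)) in Hup; [|lra].
    unfold Rdiv in Hup. rewrite Rmult_assoc, Rinv_l in Hup by lra.
    assert (0 < INR T ^ T) by (apply pow_lt; lra).
    assert (INR T ^ T * (INR T / alpha') * alpha' = INR T * INR T ^ T) by (field; lra).
    nra. }
  assert (HE1 : 1 <= E) by nra.
  assert (HloE : (INR T - 1) * E < INR T).
  { apply Rnot_ge_lt; intro C.
    assert (Hp := pow_incr (INR T) ((INR T - 1) * E) T ltac:(split; lra)).
    rewrite Rpow_mult_distr, HET in Hp.
    assert (HTp : INR T ^ T = INR T * INR T ^ (T - 1)).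
    { rewrite HTT. simpl. rewrite Nat.sub_0_r. reflexivity. }
    assert (0 < INR T ^ (T - 1)) by (apply pow_lt; lra).
    apply (Rmult_lt_compat_r (INR T ^ (T - 1))) in Hlo; [|lra].
    unfold Rdiv in Hlo. rewrite Rmult_assoc, Rinv_l in Hlo by lra.
    assert ((INR T - 1) ^ T * (INR T / alpha') * alpha' = INR T * (INR T - 1) ^ T) by (field; lra).
    nra. }
  set (k := Z.to_nat (t - m)).
  assert (Hk1 : (1 <= k)%nat) by (unfold k; lia).
  assert (Hkt : IZR t - IZR m = INR k).
  { unfold k. rewrite INR_IZR_INZ, Z2Nat.id by lia. rewrite <- minus_IZR. reflexivity. }
  assert (Hexpt : exp (n * IZR t) = exp (n * IZR m) * E ^ k).
  { replace (n * IZR t) with (n * IZR m + INR k * n) by (rewrite <- Hkt; ring).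
    rewrite exp_plus, exp_pow_nat. reflexivity. }
  assert (Hem : 0 < exp (n * IZR m)) by apply exp_pos.
  assert (HkT := key alpha' E T k Hal HT1 HE1 HupE HloE HET' Hk1).
  assert (Hkp : 1 <= INR k) by (change 1 with (INR 1); apply le_INR; lia).
  rewrite Hkt, Hexpt.
  split.
  - replace (n * (IZR m - INR T)) with (n * IZR m + - (INR T * n)) by ring.
    rewrite exp_plus, exp_Ropp, exp_pow_nat. fold E. rewrite HET.
    assert (Hb := bernoulli E (/ INR T) k ltac:(apply Rlt_le, Rinv_0_lt_compat; lra)
                  ltac:(assert (INR T * (1 + / INR T) = INR T + 1) by (field; lra); nra)).
    replace (INR k / alpha' * (exp (n * IZR m) * / (INR T / alpha')))
      with (exp (n * IZR m) * (INR k * / INR T)) by (field; lra).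
    nra.
  - assert (Hn : 0 < n).
    { assert (ln E = n) by (unfold E; apply ln_exp).
      assert (1 < E) by nra. rewrite <- H. rewrite <- ln_1. apply ln_increasing; lra. }
    assert (HnD : n * Delta <= 1 - delta).
    { apply (Rmult_le_compat_l n) in HDnu; [|lra].
      replace (n * ((1 - delta) / n)) with (1 - delta) in HDnu by (field; lra). lra. }
    assert (Hed : delta <= exp (- (n * Delta))) by (generalize (exp_ineq1_le (- (n * Delta))); lra).
    replace (n * (x - Delta)) with (n * x + - (n * Delta)) by ring.
    rewrite exp_plus.
    assert (Hex : 0 < exp (n * x)) by apply exp_pos.
    assert (Hxm' : exp (n * x) <= exp (n * IZR m)).
    { destruct (Req_dec x (IZR m)) as [->|]; [lra|]. left; apply exp_increasing; nra. }
    assert (HEk : 1 <= E ^ k) by (apply pow_R1_Rle; lra).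
    assert (Hq : delta * (INR k / alpha') * exp (n * x) - exp (n * x) * exp (- (n * Delta))
                 <= exp (n * x) * (delta * (INR k / alpha' - 1))) by nra.
    destruct (Rle_lt_dec (INR k) alpha') as [Hsm|Hbg].
    + assert (INR k / alpha' <= 1) by (unfold Rdiv; assert (0 < / alpha') by (apply Rinv_0_lt_compat; lra); assert (alpha' * / alpha' = 1) by (field; lra); nra).
      assert (exp (n * x) * (delta * (INR k / alpha' - 1)) <= 0).
      { assert (delta * (INR k / alpha' - 1) <= 0) by nra. nra. }
      assert (exp (n * IZR m) <= exp (n * IZR m) * E ^ k) by nra.
      lra.
    + assert (Hka : 1 < INR k / alpha') by (unfold Rdiv; assert (0 < / alpha') by (apply Rinv_0_lt_compat; lra); assert (alpha' * / alpha' = 1) by (field; lra); nra).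
      assert (INR k / alpha' <= E ^ k) by (unfold Rdiv; assert (0 < / alpha') by (apply Rinv_0_lt_compat; lra); assert (alpha' * / alpha' = 1) by (field; lra); nra).
      assert (exp (n * x) * (delta * (INR k / alpha' - 1)) <= exp (n * IZR m) * (delta * (INR k / alpha' - 1))) by (apply Rmult_le_compat_r; nra).
      assert (exp (n * IZR m) * (1 + delta * (INR k / alpha' - 1)) <= exp (n * IZR m) * E ^ k) by (apply Rmult_le_compat_l; nra).
      lra.
Qed.
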